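(* Let $s$ be a continuous proper scoring rule with convex exposure on an $n$-outcome forecast domain $\mathcal{D}$, with expected reward function $G$ and exposure function $\mathbf{g}$. Fix forecasts $\mathbf{p}_1,\dots,\mathbf{p}_m\in\mathcal{D}$ and non-negative weights $w_1,\dots,w_m$ with $\sum_i w_i=1$. For $\mathbf{p}\in\mathcal{D}$ and $j\in[n]$ define \[u(\mathbf{p};j):=s(\mathbf{p};j)-\sum_{i=1}^m w_i\, s(\mathbf{p}_i;j).\] Let $\mathbf{p}^*\in\mathcal{D}$ be the quasi-arithmetic pool of $(\mathbf{p}_i,w_i)_{i=1}^m$ with respect to $\mathbf{g}$. Then the quantity $\min_{j\in[n]} u(\mathbf{p};j)$, as a function of $\mathbf{p}\in\mathcal{D}$, is uniquely maximized at $\mathbf{p}=\mathbf{p}^*$. Furthermore, $u(\mathbf{p}^*;j)$ is the same for all $j\in[n]$; this common value is non-negative, and it is positive unless all forecasts $\mathbf{p}_i$ with $w_i>0$ are equal.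
   Context: $\Delta^n\subseteq\mathbb{R}^n$ is the standard probability simplex with vertices $\delta_1,\dots,\delta_n$ ($\delta_j$ the $j$-th standard basis vector). An $n$-outcome forecast domain is a convex subset of $\Delta^n$ of dimension $n-1$ (containing a subset homeomorphic to $\mathbb{R}^{n-1}$). A proper scoring rule on $\mathcal{D}$ is a function $s:\mathcal{D}\times[n]\to\mathbb{R}$ such that for all $\mathbf{p}\in\mathcal{D}$, $\sum_j p(j)s(\mathbf{p};j)\ge\sum_j p(j)s(\mathbf{x};j)$ for all $\mathbf{x}\in\mathcal{D}$, with equality only when $\mathbf{x}=\mathbf{p}$. Its expected reward function is $G(\mathbf{p}):=\sum_j p(j)s(\mathbf{p};j)$; for continuous $s$, $G$ is differentiable and strictly convex, and $s(\mathbf{p};j)=G(\mathbf{p})+\langle\mathbf{g}(\mathbf{p}),\delta_j-\mathbf{p}\rangle$, where $\mathbf{g}=\nabla G$ is called the exposure function. Values of $\mathbf{g}$ are understood modulo translation by the all-ones vector $\mathbf{1}_n$ (equivalently, projected onto $\{\mathbf{x}:\sum_i x_i=0\}$). $s$ has convex exposure if the range of $\mathbf{g}$ is a convex set. The quasi-arithmetic (QA) pool of $(\mathbf{p}_i,w_i)$ with respect to $\mathbf{g}$ is the unique $\mathbf{p}^*\in\mathcal{D}$ with $\mathbf{g}(\mathbf{p}^* )=\sum_i w_i\mathbf{g}(\mathbf{p}_i)$ (equality modulo translation by $\mathbf{1}_n$); it exists by convex exposure. *)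

(* Defs.v *)
From mathcomp Require Import all_boot all_order all_algebra.
From mathcomp Require Import reals constructive_ereal.
Set Implicit Arguments. Unset Strict Implicit. Unset Printing Implicit Defensive.
Import Order.TTheory GRing.Theory Num.Theory.
Local Open Scope ring_scope.

Section Defs.
Variable R : realType.
Variable n : nat.
Notation vec := 'rV[R]_n.

Definition dotv (x y : vec) : R := \sum_(j < n) x ord0 j * y ord0 j.

Definition supn (x : vec) : R := \big[Num.max/0]_(j < n) `|x ord0 j|.

Definition delta (j : 'I_n) : vec := \row_(k < n) (if k == j then 1 else 0).

Definition ones : vec := const_mx 1.

Definition simplex (p : vec) : Prop :=
  (forall j, 0 <= p ord0 j) /\ \sum_(j < n) p ord0 j = 1.

Definition convex_set (D : vec -> Prop) : Prop :=
  forall x y t, D x -> D y -> 0 <= t <= 1 -> D (t *: x + (1 - t) *: y).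

(* An n-outcome forecast domain: a convex subset of Delta^n of dimension n-1,
   i.e. whose affine hull is the whole hyperplane {sum = 1}; equivalently it
   contains n affinely independent points (rows of an invertible matrix, since
   all points lie on an affine hyperplane not through the origin). *)
Definition forecast_domain (D : vec -> Prop) : Prop :=
  (forall p, D p -> simplex p) /\ convex_set D /\
  exists Q : 'M[R]_n, (forall k, D (row k Q)) /\ \rank Q = n.

Definition proper_scoring_rule (D : vec -> Prop) (s : vec -> 'I_n -> R) : Prop :=
  forall p x, D p -> D x ->
    \sum_(j < n) p ord0 j * s x j <= \sum_(j < n) p ord0 j * s p j /\
    (\sum_(j < n) p ord0 j * s x j = \sum_(j < n) p ord0 j * s p j -> x = p).

Definition continuous_on_dom (D : vec -> Prop) (s : vec -> 'I_n -> R) : Prop :=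
  forall p j, D p -> forall e : R, 0 < e -> exists2 d : R, 0 < d &
    forall x, D x -> supn (x - p) < d -> `|s x j - s p j| < e.

Definition exp_reward (s : vec -> 'I_n -> R) (p : vec) : R :=
  \sum_(j < n) p ord0 j * s p j.

(* Since D lies in the
   hyperplane {sum = 1}, such v is only determined modulo translation by 1_n. *)
Definition rel_gradient (D : vec -> Prop) (F : vec -> R) (p v : vec) : Prop :=
  forall e : R, 0 < e -> exists2 d : R, 0 < d &
    forall x, D x -> supn (x - p) < d ->
      `|F x - F p - dotv v (x - p)| <= e * supn (x - p).

Definition exposure_function (D : vec -> Prop) (s : vec -> 'I_n -> R)
    (g : vec -> vec) : Prop :=
  forall p, D p -> rel_gradient D (exp_reward s) p (g p).

Definition eq_mod1 (x y : vec) : Prop := exists c : R, x = y + c *: ones.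

Definition convex_exposure (D : vec -> Prop) (g : vec -> vec) : Prop :=
  forall p q t, D p -> D q -> 0 <= t <= 1 ->
    exists2 r, D r & eq_mod1 (g r) (t *: g p + (1 - t) *: g q).

Definition qa_pool (D : vec -> Prop) (g : vec -> vec) (m : nat)
    (P : 'I_m -> vec) (w : 'I_m -> R) (pstar : vec) : Prop :=
  D pstar /\ eq_mod1 (g pstar) (\sum_(i < m) w i *: g (P i)).

(* minimum over j in [n], as an extended real (+oo for n = 0) *)
Definition minj (f : 'I_n -> R) : \bar R := \big[Order.min/+oo%E]_(j < n) (f j)%:E.

End Defs.

(* Main.v *)
Require Import Defs.
From mathcomp Require Import all_boot all_order all_algebra.
From mathcomp Require Import reals constructive_ereal.
From mathcomp Require Import ring lra.
Import Order.TTheory GRing.Theory Num.Theory.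
Set Implicit Arguments. Unset Strict Implicit.
Local Open Scope ring_scope.

Lemma supn_ge0 (R : realType) n (v : 'rV[R]_n) : 0 <= supn v.
Proof. rewrite /supn; elim/big_ind: _ => // a b ha hb; rewrite le_max ha //. Qed.

Lemma supn_le (R : realType) n (v : 'rV[R]_n) b :
  0 <= b -> (forall j, `|v ord0 j| <= b) -> supn v <= b.
Proof. by move=> hb hj; rewrite /supn; apply: bigmax_le. Qed.

Lemma le_supn (R : realType) n (v : 'rV[R]_n) j : `|v ord0 j| <= supn v.
Proof. exact: le_bigmax. Qed.

Lemma supnZ (R : realType) n (v : 'rV[R]_n) t : 0 <= t ->
  supn (t *: v) <= t * supn v.
Proof.
move=> ht; apply: supn_le; first by apply: mulr_ge0 => //; apply: supn_ge0.
by move=> j; rewrite mxE normrM ger0_norm // ler_wpM2l // le_supn.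
Qed.

Lemma fin_delta (R : realType) n (Q : 'I_n -> R -> Prop) :
  (forall j d d', 0 < d' <= d -> Q j d -> Q j d') ->
  (forall j, exists2 d, 0 < d & Q j d) -> exists2 d, 0 < d & forall j, Q j d.
Proof.
move=> mono ex.
suff H : forall k, exists2 d, 0 < d & forall j : 'I_n, (j < k)%N -> Q j d.
  by have [d d0 Hd] := H n; exists d => // j; apply: Hd.
elim=> [|k [d d0 Hd]]; first by exists 1.
case: (ltnP k n) => [kn|nk]; last first.
  exists d => // j _; apply: Hd; exact: leq_trans (ltn_ord j) nk.
have [d1 d10 Hd1] := ex (Ordinal kn).
exists (Num.min d d1); first by rewrite lt_min d0 d10.
move=> j; rewrite ltnS leq_eqVlt => /orP [/eqP jk|jk].
  apply: (mono _ d1); first by rewrite lt_min d0 d10 /= ge_min lexx orbT.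
  by have -> : j = Ordinal kn by apply: val_inj.
apply: (mono _ d); first by rewrite lt_min d0 d10 /= ge_min lexx.
exact: Hd.
Qed.

Lemma le0_eps (R : realType) (a K : R) : 0 <= K ->
  (forall e, 0 < e -> a <= K * e) -> a <= 0.
Proof.
move=> K0 H; rewrite leNgt; apply/negP => a0.
have e0 : 0 < a / (K + 1) by apply: divr_gt0 => //; lra.
have := H _ e0.
have -> : K * (a / (K + 1)) = a - a / (K+1).
  by field; lra.
lra.
Qed.

Lemma small_t (R : realType) (N d : R) : 0 <= N -> 0 < d ->
  exists t, 0 < t /\ t <= 1 /\ t * N < d.
Proof.
move=> N0 d0; exists (d / (d + N + 1)).
have h : 0 < d + N + 1 by lra.
have e : d / (d + N + 1) * (d + N + 1) = d by field; lra.
have t0 : 0 < d / (d + N + 1) by apply: divr_gt0.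
split => //; split; nra.
Qed.

Lemma dotvZ (R : realType) n (v d : 'rV[R]_n) t : dotv v (t *: d) = t * dotv v d.
Proof. rewrite /dotv mulr_sumr; apply: eq_bigr => j _; rewrite mxE; ring. Qed.

Lemma tangent (R : realType) (n : nat) (D : 'rV[R]_n -> Prop)
  (s : 'rV[R]_n -> 'I_n -> R) (g : 'rV[R]_n -> 'rV[R]_n) x z :
  convex_set D -> proper_scoring_rule D s -> continuous_on_dom D s ->
  exposure_function D s g -> D x -> D z ->
  \sum_(j < n) (z - x) ord0 j * s x j = dotv (g x) (z - x).
Proof.
move=> cD pr cont ex Dx Dz.
set d := z - x.
set N := supn d.
set M := \sum_(j < n) `|d ord0 j|.
have N0 : 0 <= N by apply: supn_ge0.
have M0 : 0 <= M by apply: sumr_ge0 => j _.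
set S := fun y => \sum_(j < n) d ord0 j * s y j.
set Gd := dotv (g x) d.
pose xt t := t *: z + (1 - t) *: x.
have F1 : forall t, xt t - x = t *: d.
  by move=> t; apply/rowP => k; rewrite !mxE; ring.
have F2 : forall t y, \sum_(j < n) xt t ord0 j * s y j
    = \sum_(j < n) x ord0 j * s y j + t * S y.
  move=> t y; rewrite /S mulr_sumr -big_split; apply: eq_bigr => j _.
  by rewrite /d !mxE /=; ring.
have Dxt : forall t, 0 <= t <= 1 -> D (xt t) by move=> t ht; apply: cD.
have key : forall e, 0 < e -> S x - Gd <= N * e /\ Gd - S x <= (N + M) * e.
  move=> e e0.
  have [d0 d00 Hd0] := ex x Dx e e0.
  have [d1 d10 Hd1] := @fin_delta R n (fun j dd => forall y, D y -> supn (y - x) < dd ->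
       `|s y j - s x j| < e)
    (fun j dd dd' hdd H y Dy hy => H y Dy (lt_le_trans hy (proj2 (andP hdd))))
    (fun j => cont x j Dx e e0).
  have dm : 0 < Num.min d0 d1 by rewrite lt_min d00 d10.
  have [t [t0 [t1 tN]]] := small_t N0 dm.
  have ht : 0 <= t <= 1 by apply/andP; split => //; apply: ltW.
  have sup_t : supn (xt t - x) <= t * N by rewrite F1; apply: supnZ; apply: ltW.
  have sup_lt : supn (xt t - x) < Num.min d0 d1 by apply: le_lt_trans tN.
  move: sup_lt; rewrite lt_min => /andP [sl0 sl1].
  have Hdiff := Hd0 _ (Dxt t ht) sl0.
  rewrite F1 dotvZ -/Gd in Hdiff.
  have Hdiff' : `|exp_reward s (xt t) - exp_reward s x - t * Gd| <= e * (t * N).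
    by apply: le_trans Hdiff _; rewrite -F1; apply: ler_wpM2l => //; apply: ltW.
  move: Hdiff'; rewrite ler_norml => /andP [Hlo Hhi].
  have [pr1 _] := pr (xt t) x (Dxt t ht) Dx.
  have [pr2 _] := pr x (xt t) Dx (Dxt t ht).
  rewrite /exp_reward !F2 in pr1.
  rewrite /exp_reward F2 in Hlo Hhi.
  have Hc : S (xt t) - S x <= M * e.
    rewrite /S /M -sumrB mulr_suml; apply: ler_sum => j _.
    rewrite -mulrBr; apply: le_trans (ler_norm _) _; rewrite normrM.
    apply: ler_wpM2l => //; apply: ltW; apply: Hd1 => //.
    exact: Dxt.
  split.
    suff : t * (S x - Gd) <= t * (N * e) by rewrite ler_pM2l.
    nra.
  suff : t * (Gd - S (xt t)) <= t * (N * e) by rewrite ler_pM2l //; lra.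
  nra.
apply/eqP; rewrite eq_le; apply/andP; split.
  rewrite -subr_le0; apply: (le0_eps N0) => e e0; exact: (key e e0).1.
rewrite -subr_le0; apply: (le0_eps (addr_ge0 N0 M0)) => e e0; exact: (key e e0).2.
Qed.

Lemma sconst (R : realType) (n : nat) (D : 'rV[R]_n -> Prop)
  (s : 'rV[R]_n -> 'I_n -> R) (g : 'rV[R]_n -> 'rV[R]_n) x :
  forecast_domain D -> proper_scoring_rule D s -> continuous_on_dom D s ->
  exposure_function D s g -> D x ->
  forall j j', s x j - g x ord0 j = s x j' - g x ord0 j'.
Proof.
move=> [simp [cD [Q [HQ rQ]]]] pr cont ex Dx.
pose v : 'cV[R]_n := \col_j (s x j - g x ord0 j).
pose a := \sum_(j < n) x ord0 j * v j ord0.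
have Hz : forall z, D z -> \sum_(j < n) z ord0 j * v j ord0 = a.
  move=> z Dz; have := @tangent R n D s g x z cD pr cont ex Dx Dz.
  rewrite /dotv => H; apply/eqP; rewrite -subr_eq0 /a -sumrB.
  have -> : \sum_(j < n) (z ord0 j * v j ord0 - x ord0 j * v j ord0)
     = \sum_(j < n) (z - x) ord0 j * s x j - \sum_(j < n) g x ord0 j * (z - x) ord0 j.
    rewrite -sumrB; apply: eq_bigr => j _; rewrite !mxE; ring.
  by rewrite H subrr.
have Qu : Q \in unitmx by rewrite -row_free_unit /row_free rQ eqxx.
pose wv : 'cV[R]_n := v - a *: const_mx 1.
have Qw : Q *m wv = 0.
  apply/colP => k; rewrite !mxE.
  have := Hz _ (HQ k); have [_ sk] := simp _ (HQ k).
  move=> Hk.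
  have -> : \sum_(j < n) Q k j * wv j 0 = \sum_(j < n) Q k j * v j ord0 - a * \sum_(j < n) Q k j.
    rewrite mulr_sumr -sumrB; apply: eq_bigr => j _; rewrite !mxE.
    ring.
  have e1 : \sum_(j < n) Q k j = 1 by rewrite -sk; apply: eq_bigr => j _; rewrite mxE.
  have e2 : \sum_(j < n) Q k j * v j ord0 = a.
    by rewrite -Hk; apply: eq_bigr => j _; rewrite !mxE.
  by rewrite e1 e2 mulr1 subrr.
have w0 : wv = 0 by rewrite -(mulKmx Qu wv) Qw mulmx0.
have Hv : forall j, s x j - g x ord0 j = a.
  move=> j; have := congr1 (fun M : 'cV[R]_n => M j ord0) w0.
  by rewrite /= !mxE mulr1 => /eqP; rewrite subr_eq0 => /eqP.
by move=> j j'; rewrite !Hv.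
Qed.
Unset Implicit Arguments.

Theorem theorem4p1 (R : realType) (n : nat) (D : 'rV[R]_n -> Prop)
  (s : 'rV[R]_n -> 'I_n -> R) (g : 'rV[R]_n -> 'rV[R]_n)
  (m : nat) (P : 'I_m -> 'rV[R]_n) (w : 'I_m -> R) (pstar : 'rV[R]_n) :
  forecast_domain D ->
  proper_scoring_rule D s ->
  continuous_on_dom D s ->
  exposure_function D s g ->
  convex_exposure D g ->
  (forall i, D (P i)) ->
  (forall i, 0 <= w i) ->
  \sum_(i < m) w i = 1 ->
  qa_pool D g P w pstar ->
  let u := fun (p : 'rV[R]_n) (j : 'I_n) => s p j - \sum_(i < m) w i * s (P i) j in
  (forall p, D p -> p <> pstar -> (minj (u p) < minj (u pstar))%E) /\
  exists c : R,
    (forall j, u pstar j = c) /\ 0 <= c /\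
    ((exists i k, 0 < w i /\ 0 < w k /\ P i <> P k) -> 0 < c).
Proof.
move=> fD pr cont ex _ DP w0 w1 [Dst [c1 Hg]] u.
have simp := fD.1.
have [st0 st1] := simp _ Dst.
have n0 : (0 < n)%N.
  case: (posnP n) => [nz|//]; exfalso; move: st1; rewrite big1 ?nz //.
    by move=> /eqP; rewrite eq_sym oner_eq0.
  by move=> j _; have := ltn_ord j; rewrite {2}nz.
pose j0 : 'I_n := Ordinal n0.
have SC := fun x Dx => @sconst R n D s g x fD pr cont ex Dx.
have Hgj : forall j, g pstar ord0 j = \sum_(i < m) w i * g (P i) ord0 j + c1.
  move=> j; rewrite Hg !mxE summxE; congr (_ + _); last by rewrite mulr1.
  by apply: eq_bigr => i _; rewrite mxE.
set c := u pstar j0.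
have Hc : forall j, u pstar j = c.
  move=> j; apply/eqP; rewrite -subr_eq0 /c /u.
  have e1 := SC _ Dst j j0.
  have e2 : forall i, s (P i) j - s (P i) j0 = g (P i) ord0 j - g (P i) ord0 j0.
    move=> i; have := SC _ (DP i) j j0; lra.
  have sB : forall (a b : 'I_m -> R), \sum_(i < m) w i * (a i - b i)
      = \sum_(i < m) w i * a i - \sum_(i < m) w i * b i.
    by move=> a b; rewrite -sumrB; apply: eq_bigr => i _; rewrite mulrBr.
  have h1 := sB (fun i => s (P i) j) (fun i => s (P i) j0).
  have h2 := sB (fun i => g (P i) ord0 j) (fun i => g (P i) ord0 j0).
  have h3 : \sum_(i < m) w i * (s (P i) j - s (P i) j0) = \sum_(i < m) w i * (g (P i) ord0 j - g (P i) ord0 j0).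
    by apply: eq_bigr => i _; rewrite e2.
  have := Hgj j; have := Hgj j0; simpl in h1, h2.
  lra.
pose A i := \sum_(j < n) pstar ord0 j * s (P i) j.
pose Gs := exp_reward s pstar.
have Havg : forall p, \sum_(j < n) pstar ord0 j * u p j
    = \sum_(j < n) pstar ord0 j * s p j - \sum_(i < m) w i * A i.
  move=> p; rewrite /u; under eq_bigr do rewrite mulrBr.
  rewrite sumrB; congr (_ - _); rewrite /A.
  under eq_bigr do rewrite mulr_sumr.
  rewrite exchange_big; apply: eq_bigr => i _; rewrite mulr_sumr.
  by apply: eq_bigr => j _; ring.
have Hcavg : \sum_(j < n) pstar ord0 j * u pstar j = c.
  under eq_bigr do rewrite Hc.
  by rewrite -mulr_suml st1 mul1r.
have AG : forall i, A i <= Gs by move=> i; exact: (pr pstar (P i) Dst (DP i)).1.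
have Hcw : c = \sum_(i < m) w i * (Gs - A i).
  rewrite -Hcavg Havg.
  have -> : \sum_(i < m) w i * (Gs - A i) = Gs * \sum_(i < m) w i - \sum_(i < m) w i * A i.
    by rewrite mulr_sumr -sumrB; apply: eq_bigr => i _; ring.
  by rewrite w1 mulr1.
have c0 : 0 <= c.
  by rewrite Hcw; apply: sumr_ge0 => i _; apply: mulr_ge0 => //; rewrite subr_ge0.
split.
  move=> p Dp pne.
  have [le1 eq1] := pr pstar p Dst Dp.
  have lt1 : \sum_(j < n) pstar ord0 j * s p j < Gs.
    rewrite lt_neqAle le1 andbT; apply/eqP => E; exact: pne (eq1 E).
  have lt2 : \sum_(j < n) pstar ord0 j * u p j < c.
    rewrite Havg -Hcavg Havg; rewrite /Gs /exp_reward in lt1; lra.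
  have [j Hj] : exists j, u p j < c.
    case E: [exists j, u p j < c]; first by move/existsP: E.
    exfalso; move/negbT/existsPn: E => E.
    have : c <= \sum_(j < n) pstar ord0 j * u p j.
      rewrite -{1}Hcavg; apply: ler_sum => j _; apply: ler_wpM2l => //.
      by rewrite Hc; move: (E j); rewrite -leNgt.
    lra.
  have -> : minj (u pstar) = c%:E.
    apply/eqP; rewrite eq_le; apply/andP; split.
      by rewrite -(Hc j0); apply: Order.TotalTheory.bigmin_le.
    by apply: le_bigmin; [exact: leey | move=> k _; rewrite Hc].
  apply: (@le_lt_trans _ _ (u p j)%:E); last by rewrite lte_fin.
  exact: Order.TotalTheory.bigmin_le.
exists c; split => //; split => //.
move=> [i [k [wi [wk Pik]]]].
have [i' [wi' Pi']] : exists i', 0 < w i' /\ P i' <> pstar.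
  case: (eqVneq (P i) pstar) => [Pi|Pi]; last by exists i; split => //; apply/eqP.
  by exists k; split => // Pk; apply: Pik; rewrite Pi Pk.
have pos : 0 < Gs - A i'.
  rewrite subr_gt0 lt_neqAle AG andbT; apply/eqP => E.
  by apply: Pi'; apply: (pr pstar (P i') Dst (DP i')).2.
rewrite Hcw (bigD1 i') //=.
have : 0 <= \sum_(i0 < m | i0 != i') w i0 * (Gs - A i0).
  by apply: sumr_ge0 => i0 _; apply: mulr_ge0 => //; rewrite subr_ge0.
have := mulr_gt0 wi' pos.
lra.
Qed.
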